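(* Fix $\alpha\in(0,\pi/4]$, $s>1$ and $\rho>0$, and suppose the execution of MaxHedge with these parameters is valid. If MaxHedge fails, then every deterministic online algorithm has competitive ratio greater than $\rho$.
   Context: A drone at $(t_x,t_y)$, $t_y\ge0$, covers $[t_x-t_y\tan\alpha,t_x+t_y\tan\alpha]$ on the $x$-axis; $\mathrm{FC}(X_0,\dots,X_i)$ denotes the set of positions covering $X_0,\dots,X_i$. For an input $X_0=(0,0),X_1,\dots,X_n$ on the $x$-axis, an online algorithm responds with $P_0=X_0$ and $P_i\in\mathrm{FC}(X_0,\dots,X_i)$ chosen knowing only $X_0,\dots,X_i$; its cost is $\sum_i|P_iP_{i+1}|$; OPT is the minimum cost with the input known in advance; the competitive ratio is the supremum over inputs of cost/OPT. Fix $s>1$ and the requests $X_0=(0,0)$, $X_i=(2(-s)^{i-1},0)$, $i\ge1$. Let $T_i$ be the apex of $\mathrm{FC}(X_0,\dots,X_i)$: $T_0=X_0$, $T_1=(1,\cot\alpha)$, $T_i=((-s)^{i-2}(1-s),s^{i-2}(1+s)\cot\alpha)$ for $i\ge2$, and $o_i=|X_0T_i|$ (the optimal offline cost for $X_0,\dots,X_i$; $o_0=0$). MaxHedge with parameter $\rho$: $Z_0=X_0$; for $i\ge1$, $Z_i=T_i+z_i(T_{i+1}-T_i)$, $z_i\ge0$, is the intersection of the halfline from $T_i$ through $T_{i+1}$ with the circle centred at $Z_{i-1}$ of radius $\rho(o_i-o_{i-1})$; if no such point exists MaxHedge fails in round $i$. The domain is the set of rounds before failure (all rounds if it never fails). The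 execution is valid if for every round $i\ge1$ in the domain, $Z_i$ lies on the same side of the $y$-axis as $T_i$. *)

(* Defs.v *)
From HB Require Import structures.
From mathcomp Require Import all_boot all_order all_algebra.
From mathcomp Require Import all_classical all_reals all_analysis.
Set Implicit Arguments. Unset Strict Implicit. Unset Printing Implicit Defensive.
Import Order.TTheory GRing.Theory Num.Theory.
Local Open Scope classical_set_scope.
Local Open Scope ring_scope.

Section Drone.
Variable R : realType.

Definition dist (p q : R * R) : R :=
  Num.sqrt ((p.1 - q.1) ^+ 2 + (p.2 - q.2) ^+ 2).

(* a drone at t (with t.2 >= 0) covers the point (x,0) *)
Definition covers (a : R) (t : R * R) (x : R) : bool :=
  (t.1 - t.2 * tan a <= x) && (x <= t.1 + t.2 * tan a).

(* t in FC(X_0,...,X_i), requests given by their x-coordinates ys *)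
Definition inFC (a : R) (ys : seq R) (t : R * R) : Prop :=
  0 <= t.2 /\ all (covers a t) ys.

(* A deterministic online algorithm: maps the requests seen so far
   (x-coordinates of X_1..X_i) to its position P_i. *)
Definition online_alg (a : R) (A : seq R -> R * R) : Prop :=
  forall xs : seq R, xs != [::] -> inFC a (0 :: xs) (A xs).

Definition alg_pos (A : seq R -> R * R) (xs : seq R) (i : nat) : R * R :=
  if i is 0 then (0, 0) else A (take i xs).

Definition path_cost (n : nat) (P : nat -> R * R) : R :=
  \sum_(i < n) dist (P i) (P i.+1).

Definition alg_cost (A : seq R -> R * R) (xs : seq R) : R :=
  path_cost (size xs) (alg_pos A xs).

Definition offline_feasible (a : R) (xs : seq R) (Q : nat -> R * R) : Prop :=
  Q 0 = (0, 0) /\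
  forall i : nat, (1 <= i <= size xs)%N -> inFC a (0 :: take i xs) (Q i).

Definition OPT (a : R) (xs : seq R) : R :=
  inf [set c | exists Q, offline_feasible a xs Q /\ c = path_cost (size xs) Q].

Definition comp_ratio (a : R) (A : seq R -> R * R) : \bar R :=
  ereal_sup [set ((alg_cost A xs / OPT a xs)%:E) | xs in [set xs | 0 < OPT a xs]].

(* ---- MaxHedge on the input X_i = (2(-s)^(i-1), 0) ---- *)

Definition cot (a : R) : R := (tan a)^-1.

Definition Tpt (a s : R) (i : nat) : R * R :=
  match i with
  | 0 => (0, 0)
  | 1 => (1, cot a)
  | k.+2 => ((- s) ^+ k * (1 - s), s ^+ k * (1 + s) * cot a)
  end.

Definition opt_o (a s : R) (i : nat) : R := dist (0, 0) (Tpt a s i).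

(* candidate parameters z >= 0 of the halfline from T_i through T_(i+1)
   meeting the circle centred at Zp of radius rho (o_i - o_(i-1)) *)
Definition hedge_set (a s rho : R) (i : nat) (Zp : R * R) : set R :=
  [set z | 0 <= z /\
     dist (Zp) ((Tpt a s i).1 + z * ((Tpt a s i.+1).1 - (Tpt a s i).1),
                (Tpt a s i).2 + z * ((Tpt a s i.+1).2 - (Tpt a s i).2))
     = rho * (opt_o a s i - opt_o a s i.-1)].

(* Z_i (None = MaxHedge has failed in round i or earlier); when the halfline
   meets the circle twice, the point farthest along the halfline is taken. *)
Fixpoint maxhedge (a s rho : R) (i : nat) : option (R * R) :=
  match i with
  | 0 => Some (0, 0)
  | k.+1 =>
    match maxhedge a s rho k with
    | None => None
    | Some Zp =>
      if `[< hedge_set a s rho k.+1 Zp !=set0 >] then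
        let z := sup (hedge_set a s rho k.+1 Zp) in
        Some ((Tpt a s k.+1).1 + z * ((Tpt a s k.+2).1 - (Tpt a s k.+1).1),
              (Tpt a s k.+1).2 + z * ((Tpt a s k.+2).2 - (Tpt a s k.+1).2))
      else None
    end
  end.

Definition maxhedge_fails (a s rho : R) : Prop :=
  exists i : nat, maxhedge a s rho i = None.

Definition maxhedge_valid (a s rho : R) : Prop :=
  forall (i : nat) (Z : R * R), (1 <= i)%N -> maxhedge a s rho i = Some Z ->
    0 < Z.1 * (Tpt a s i).1.

End Drone.

(* Main.v *)
Require Import Defs.
From HB Require Import structures.
From mathcomp Require Import all_boot all_order all_algebra.
From mathcomp Require Import all_classical all_reals all_analysis.
From mathcomp Require Import ring lra.
Import Order.TTheory GRing.Theory Num.Theory.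
Local Open Scope ring_scope.

Section Core.
Variable R : rcfType.
Variable tau : R.
Hypothesis tau_gt0 : 0 < tau.
Hypothesis tau2_le1 : tau ^+ 2 <= 1.

Definition dd2 (x y : R) := Num.sqrt (((x - y) / 2) ^+ 2 + ((x + y) / (2 * tau)) ^+ 2).
Definition nn2 (x y : R) := Num.sqrt ((x - y) ^+ 2 + (tau * (x + y)) ^+ 2).
Definition tg (t : nat) (u : R * R) := if odd t then u.1 else u.2.
Definition fr (t : nat) (u : R * R) := if odd t then u.2 else u.1.
Definition subp (u v : R * R) : R * R := (u.1 - v.1, u.2 - v.2).
Definition app (f u : R * R) := f.1 * u.1 + f.2 * u.2.
Definition Dpq (u : R * R) := dd2 u.1 u.2.
Definition Nst (f : R * R) := nn2 f.1 f.2.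
Definition addt t (f : R * R) (l : R) : R * R :=
  if odd t then (f.1 + l, f.2) else (f.1, f.2 + l).
Definition mkt t (x y : R) : R * R := if odd t then (x, y) else (y, x).

Lemma c_tauN0 : tau != 0. Proof. by rewrite gt_eqF. Qed.

Lemma tgS t u : tg t.+1 u = fr t u.
Proof. by rewrite /tg /fr /=; case: (odd t). Qed.
Lemma frS t u : fr t.+1 u = tg t u.
Proof. by rewrite /tg /fr /=; case: (odd t). Qed.
Lemma tg_sub t u v : tg t (subp u v) = tg t u - tg t v.
Proof. by rewrite /tg; case: (odd t). Qed.
Lemma fr_sub t u v : fr t (subp u v) = fr t u - fr t v.
Proof. by rewrite /fr; case: (odd t). Qed.
Lemma tg_addt t f l : tg t (addt t f l) = tg t f + l.
Proof. by rewrite /tg /addt; case: (odd t). Qed.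
Lemma fr_addt t f l : fr t (addt t f l) = fr t f.
Proof. by rewrite /fr /addt; case: (odd t). Qed.
Lemma tg_mkt t x y : tg t (mkt t x y) = x.
Proof. by rewrite /tg /mkt; case: (odd t). Qed.
Lemma fr_mkt t x y : fr t (mkt t x y) = y.
Proof. by rewrite /fr /mkt; case: (odd t). Qed.

Lemma dd2C x y : dd2 x y = dd2 y x.
Proof. by rewrite /dd2; congr Num.sqrt; congr (_ + _); [rewrite -sqrrN; congr (_ ^+ 2); rewrite -mulNr opprB | rewrite addrC]. Qed.
Lemma nn2C x y : nn2 x y = nn2 y x.
Proof. by rewrite /nn2; congr Num.sqrt; congr (_ + _); [rewrite -sqrrN opprB | rewrite addrC]. Qed.

Lemma DpqE t u : Dpq u = dd2 (tg t u) (fr t u).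
Proof. by rewrite /Dpq /tg /fr; case: (odd t) => //; rewrite dd2C. Qed.
Lemma NstE t u : Nst u = nn2 (tg t u) (fr t u).
Proof. by rewrite /Nst /tg /fr; case: (odd t) => //; rewrite nn2C. Qed.
Lemma appE t f u : app f u = tg t f * tg t u + fr t f * fr t u.
Proof. by rewrite /app /tg /fr; case: (odd t) => //; rewrite addrC. Qed.

Lemma dd2_ge0 x y : 0 <= dd2 x y. Proof. exact: sqrtr_ge0. Qed.
Lemma nn2_ge0 x y : 0 <= nn2 x y. Proof. exact: sqrtr_ge0. Qed.

Lemma cs2 (w1 w2 z1 z2 : R) :
  w1 * z1 + w2 * z2 <= Num.sqrt (w1 ^+ 2 + w2 ^+ 2) * Num.sqrt (z1 ^+ 2 + z2 ^+ 2).
Proof.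
rewrite -sqrtrM; last by rewrite addr_ge0 // sqr_ge0.
apply: (le_trans (ler_norm _)); rewrite -sqrtr_sqr; apply: ler_wsqrtr.
have -> : (w1 ^+ 2 + w2 ^+ 2) * (z1 ^+ 2 + z2 ^+ 2) =
   (w1 * z1 + w2 * z2) ^+ 2 + (w1 * z2 - w2 * z1) ^+ 2 by ring.
by rewrite lerDl sqr_ge0.
Qed.

Lemma cs_dd2 a b c d : a * c + b * d <= nn2 a b * dd2 c d.
Proof.
have -> : a * c + b * d = (a - b) * ((c - d) / 2) + (tau * (a + b)) * ((c + d) / (2 * tau)).
  by field; exact: c_tauN0.
exact: cs2.
Qed.

Lemma cs_app f u : app f u <= Nst f * Dpq u.
Proof. exact: cs_dd2. Qed.

Definition m1 (d1 d2 : R) := (1 + tau ^+ 2) * d1 + (1 - tau ^+ 2) * d2.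
Definition m2 (d1 d2 : R) := (1 + tau ^+ 2) * d2 + (1 - tau ^+ 2) * d1.

Lemma exact_dd2 k d1 d2 : 0 <= k ->
  (k * m1 d1 d2) * d1 + (k * m2 d1 d2) * d2 = nn2 (k * m1 d1 d2) (k * m2 d1 d2) * dd2 d1 d2.
Proof.
move=> k0; set c := 4 * k * tau ^+ 2.
have c0 : 0 <= c by rewrite /c; apply: mulr_ge0; [apply: mulr_ge0 => //|exact: sqr_ge0].
set Y := ((d1 - d2) / 2) ^+ 2 + ((d1 + d2) / (2 * tau)) ^+ 2.
have Y0 : 0 <= Y by rewrite addr_ge0 // sqr_ge0.
have -> : nn2 (k * m1 d1 d2) (k * m2 d1 d2) = c * dd2 d1 d2.
  rewrite /nn2 /dd2 -/Y.
  have -> : (k * m1 d1 d2 - k * m2 d1 d2) ^+ 2 + (tau * (k * m1 d1 d2 + k * m2 d1 d2)) ^+ 2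
      = c ^+ 2 * Y by rewrite /c /Y /m1 /m2; field; exact: c_tauN0.
  by rewrite sqrtrM ?sqr_ge0 // sqrtr_sqr ger0_norm.
rewrite -[X in _ = X]mulrA -expr2 /dd2 -/Y sqr_sqrtr //.
by rewrite /c /Y /m1 /m2; field; exact: c_tauN0.
Qed.

Lemma nn2_mono f g l : 0 <= l -> (1 - tau ^+ 2) * g <= (1 + tau ^+ 2) * f ->
  nn2 f g <= nn2 (f + l) g.
Proof.
move=> l0 H; rewrite /nn2; apply: ler_wsqrtr.
rewrite -subr_ge0.
have -> : (f + l - g) ^+ 2 + (tau * (f + l + g)) ^+ 2 - ((f - g) ^+ 2 + (tau * (f + g)) ^+ 2)
  = l * (2 * ((1 + tau ^+ 2) * f - (1 - tau ^+ 2) * g) + l * (1 + tau ^+ 2)) by ring.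
apply: mulr_ge0 => //; apply: addr_ge0.
  by apply: mulr_ge0 => //; rewrite subr_ge0.
by apply: mulr_ge0 => //; apply: addr_ge0 => //; exact: sqr_ge0.
Qed.

Lemma step_loc f g d1 d2 eps :
  f <= g -> (1 - tau ^+ 2) * g <= (1 + tau ^+ 2) * f -> 0 < g ->
  d2 < d1 -> 0 <= d2 -> 0 < eps ->
  exists l, [/\ 0 <= l, g <= f + l, (1 - tau ^+ 2) * (f + l) <= (1 + tau ^+ 2) * g,
     0 < f + l & nn2 (f + l) g * dd2 d1 d2 - eps <= (f + l) * d1 + g * d2].
Proof.
move=> fg Hfg g0 d21 d20 e0.
have t2 : 0 < tau ^+ 2 by rewrite exprn_gt0.
have t1 : 0 <= 1 - tau ^+ 2 by rewrite subr_ge0.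
have tp : 0 < 1 + tau ^+ 2 by rewrite ltr_wpDr // ltW.
have f0 : 0 <= f.
  have : 0 <= (1 + tau ^+ 2) * f by apply: le_trans Hfg; apply: mulr_ge0 => //; exact: ltW.
  by rewrite pmulr_rge0.
have d10 : 0 < d1 by apply: le_lt_trans d21.
have M2 : 0 <= m2 d1 d2 by rewrite /m2 addr_ge0 // mulr_ge0 // ?ltW.
have M12 : m2 d1 d2 <= m1 d1 d2.
  rewrite -subr_ge0 (_ : m1 d1 d2 - m2 d1 d2 = 2 * tau ^+ 2 * (d1 - d2)); last by rewrite /m1 /m2; ring.
  by apply: mulr_ge0; [apply: mulr_ge0 => //; exact: ltW | rewrite subr_ge0 ltW].
case: (ltrP 0 (m2 d1 d2)) => Hm2.
  set k := g / m2 d1 d2.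
  have k0 : 0 < k by rewrite divr_gt0.
  have kg : k * m2 d1 d2 = g by rewrite /k mulfVK // gt_eqF.
  exists (k * m1 d1 d2 - f).
  have -> : f + (k * m1 d1 d2 - f) = k * m1 d1 d2 by ring.
  split.
  - rewrite (_ : k * m1 d1 d2 - f = (g * m1 d1 d2 - f * m2 d1 d2) / m2 d1 d2); last first.
      by rewrite /k; field; rewrite gt_eqF.
    apply: divr_ge0 (ltW Hm2); rewrite subr_ge0.
    apply: (@le_trans _ _ (f * m1 d1 d2)); first exact: ler_wpM2l.
    by apply: ler_wpM2r => //; apply: le_trans M12.
  - by rewrite -kg ler_wpM2l // ltW.
  - rewrite -kg mulrCA [X in _ <= X]mulrCA; apply: ler_wpM2l; first exact: ltW.
    rewrite -subr_ge0 (_ : (1 + tau ^+ 2) * m2 d1 d2 - (1 - tau ^+ 2) * m1 d1 d2 = 4 * tau ^+ 2 * d2).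
      by rewrite !mulr_ge0 // ltW.
    by rewrite /m1 /m2; ring.
  - by rewrite mulr_gt0 // (lt_le_trans Hm2 M12).
  - by rewrite -kg exact_dd2; [lra | exact: ltW].
have m20 : m2 d1 d2 = 0 by apply/eqP; rewrite eq_le Hm2 M2.
have dz : d2 = 0.
  apply/eqP; rewrite eq_le d20 andbT.
  have : (1 + tau ^+ 2) * d2 <= 0.
    by rewrite -m20 /m2 lerDl mulr_ge0 // ltW.
  by rewrite pmulr_rle0.
have tz : tau ^+ 2 = 1.
  have : (1 - tau ^+ 2) * d1 = 0 by move: m20; rewrite /m2 dz mulr0 add0r.
  by move/eqP; rewrite mulf_eq0 (gt_eqF d10) orbF subr_eq0 => /eqP <-.
exists (g + d1 * g ^+ 2 / eps + 1).
set T := f + (g + d1 * g ^+ 2 / eps + 1).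
have q0 : 0 <= d1 * g ^+ 2 / eps by rewrite divr_ge0 ?mulr_ge0 ?ltW // sqr_ge0.
have TL : d1 * g ^+ 2 / eps <= T by rewrite /T; lra.
split.
- by rewrite addr_ge0 // addr_ge0 // ltW.
- by rewrite /T; lra.
- rewrite tz; lra.
- by rewrite /T; lra.
rewrite dz mulr0 addr0 lerBlDr.
have T0 : 0 <= T by apply: le_trans TL.
rewrite /nn2 /dd2 -sqrtrM; last by rewrite addr_ge0 // sqr_ge0.
have E0 : 0 <= T * d1 + eps by rewrite addr_ge0 // ?mulr_ge0 // ltW.
rewrite -(ger0_norm E0) -sqrtr_sqr; apply: ler_wsqrtr.
have -> : ((T - g) ^+ 2 + (tau * (T + g)) ^+ 2) * (((d1 - 0) / 2) ^+ 2 + ((d1 + 0) / (2 * tau)) ^+ 2)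
   = (T ^+ 2 + g ^+ 2) * d1 ^+ 2.
  rewrite exprMn tz mul1r subr0 addr0.
  rewrite [(d1 / (2 * tau)) ^+ 2]expr_div_n [(2 * tau) ^+ 2]exprMn tz mulr1.
  by field.
have key : g ^+ 2 * d1 ^+ 2 <= 2 * T * d1 * eps.
  have : d1 * g ^+ 2 <= T * eps by rewrite -ler_pdivrMr.
  move=> h; have : d1 * (d1 * g ^+ 2) <= d1 * (T * eps) by rewrite ler_wpM2l // ltW.
  move=> h2; apply: (le_trans (y := 2 * (d1 * (d1 * g ^+ 2)))).
    by rewrite -subr_ge0 (_ : _ - _ = d1 ^+ 2 * g ^+ 2); [rewrite mulr_ge0 // sqr_ge0 | ring].
  have -> : 2 * T * d1 * eps = 2 * (d1 * (T * eps)) by ring.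
  by rewrite ler_wpM2l.
rewrite -subr_ge0 (_ : _ - _ = (2 * T * d1 * eps - g ^+ 2 * d1 ^+ 2) + eps ^+ 2); last by ring.
by rewrite addr_ge0 ?subr_ge0 // sqr_ge0.
Qed.

Lemma mono_chain (mu : nat -> R) n i j :
  (forall j, (1 <= j < n)%N -> mu j.+1 <= mu j) -> (1 <= i)%N -> (i <= j)%N -> (j <= n)%N ->
  mu j <= mu i.
Proof.
move=> Hm i1; elim: j => [|j IH]; first by rewrite leqn0 => /eqP ->.
rewrite leq_eqVlt => /orP[/eqP <- //| ij] jn.
apply: le_trans (IH ij (ltnW jn)); apply: Hm.
by rewrite jn andbT (leq_trans i1 ij).
Qed.

Lemma abel n (mu x r : nat -> R) :
  (forall j, (1 <= j < n)%N -> mu j.+1 <= mu j) ->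
  (forall j, (1 <= j <= n)%N -> 0 <= mu j) ->
  (forall j, (1 <= j <= n)%N -> \sum_(1 <= i < j.+1) x i <= \sum_(1 <= i < j.+1) r i) ->
  \sum_(1 <= j < n.+1) mu j * x j <= \sum_(1 <= j < n.+1) mu j * r j.
Proof.
elim: n mu => [|n IH] mu Hm H0 Hs; first by rewrite !big_geq.
rewrite -subr_ge0 -sumrB.
set c := mu n.+1.
have E : \sum_(1 <= i < n.+2) (mu i * r i - mu i * x i) =
  \sum_(1 <= i < n.+1) ((mu i - c) * r i - (mu i - c) * x i)
  + c * (\sum_(1 <= i < n.+2) r i - \sum_(1 <= i < n.+2) x i).
  rewrite (big_nat_recr n.+1 1 (fun i => mu i * r i - mu i * x i)) //.
  rewrite (big_nat_recr n.+1 1 r) // (big_nat_recr n.+1 1 x) //=.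
  have -> : \sum_(1 <= i < n.+1) ((mu i - c) * r i - (mu i - c) * x i) =
     \sum_(1 <= i < n.+1) (mu i * r i - mu i * x i) -
     (c * \sum_(1 <= i < n.+1) r i - c * \sum_(1 <= i < n.+1) x i).
    rewrite !mulr_sumr -!sumrB; apply: eq_bigr => i _; ring.
  rewrite /c; ring.
rewrite E; apply: addr_ge0.
  rewrite sumrB subr_ge0; apply: IH.
  - by move=> j /andP[j1 jn]; rewrite lerD2r Hm // j1 (ltn_trans jn).
  - move=> j /andP[j1 jn]; by rewrite subr_ge0 (@mono_chain mu n.+1 j n.+1 Hm j1 (leqW jn) (leqnn _)).
  - by move=> j /andP[j1 jn]; apply: Hs; rewrite j1 (leqW jn).
apply: mulr_ge0; first by apply: H0; rewrite /=.
by rewrite subr_ge0; apply: (Hs n.+1); rewrite /= ltnSn.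
Qed.

Variables (k : nat) (Th Y : nat -> R * R) (r : nat -> R).
Hypothesis hk1 : (1 <= k)%N.
Hypothesis hY0 : Y 0%N = (0, 0).
Hypothesis hYa : forall t, (1 <= t <= k)%N -> tg t (Y t) = tg t (Th t).
Hypothesis hYb : forall t, (1 <= t <= k)%N -> fr t (Th t) <= fr t (Y t) /\ fr t (Y t) < tg t (Th t).
Hypothesis hYk : Y k = Th k.
Hypothesis hTU : forall t, (1 <= t)%N -> tg t (Th t.+1) = tg t (Th t).
Hypothesis hTh1 : fr 1 (Th 1%N) = 0.
Hypothesis hdist : forall t, (1 <= t < k)%N -> Dpq (subp (Y t) (Y t.-1)) = r t.
Hypothesis hfail : r k < Dpq (subp (Y k) (Y k.-1)).

Lemma dominance t : (1 <= t <= k)%N ->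
  fr t (subp (Y t) (Y t.-1)) < tg t (subp (Y t) (Y t.-1)) /\ 0 <= fr t (subp (Y t) (Y t.-1)).
Proof.
move=> /andP[t1 tk].
have [A1 A2] : fr t (Y t.-1) = fr t (Th t) /\ tg t (Y t.-1) <= fr t (Th t).
  case: t t1 tk => [//|[|t]] _ tk.
    by rewrite /= hY0 hTh1 /fr /tg /=.
  rewrite /= [fr t.+2 (Y _)]frS [tg t.+2 (Y _)]tgS hYa ?(ltnW tk) // [fr t.+2 _]frS hTU //.
  have [_ h] := hYb t.+1 (ltnW tk).
  by split => //; exact: ltW.
have [B1 B2] := hYb t (introT andP (conj t1 tk)).
rewrite tg_sub fr_sub hYa ?t1 // A1 subr_ge0; split => //.
lra.
Qed.

Definition Inv t (phi : R * R) :=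
  [/\ fr t phi <= tg t phi, (1 - tau ^+ 2) * tg t phi <= (1 + tau ^+ 2) * fr t phi & 0 < tg t phi].

Definition geTh j (P : nat -> R * R) := (Th j).1 <= (P j).1 /\ (Th j).2 <= (P j).2.

Lemma geTh_tg j P t : geTh j P -> tg t (Th j) <= tg t (P j) /\ fr t (Th j) <= fr t (P j).
Proof. by rewrite /tg /fr => -[]; case: (odd t). Qed.

Definition Scert t := exists (phi : R * R) (mu : nat -> R) (G : R),
  [/\ 0 < G, Inv t phi, mu t = Nst phi,
      (forall j, (t <= j < k)%N -> mu j.+1 <= mu j) /\
      (forall j, (t <= j <= k)%N -> 0 <= mu j) &
      forall P : nat -> R * R, (forall j, (t <= j <= k)%N -> geTh j P) ->
        app phi (subp (Y t.-1) (P t.-1)) + \sum_(t <= j < k.+1) mu j * r j + G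
        <= \sum_(t <= j < k.+1) mu j * Dpq (subp (P j) (P j.-1))].

Lemma m_props d1 d2 : d2 < d1 -> 0 <= d2 ->
  [/\ 0 <= m2 d1 d2, m2 d1 d2 <= m1 d1 d2, 0 < m1 d1 d2 &
      (1 - tau ^+ 2) * m1 d1 d2 <= (1 + tau ^+ 2) * m2 d1 d2].
Proof.
move=> d21 d20.
have t2 : 0 < tau ^+ 2 by rewrite exprn_gt0.
have t1 : 0 <= 1 - tau ^+ 2 by rewrite subr_ge0.
have tp : 0 < 1 + tau ^+ 2 by rewrite ltr_wpDr // ltW.
have d10 : 0 < d1 by apply: le_lt_trans d21.
have M2 : 0 <= m2 d1 d2 by rewrite /m2 addr_ge0 // mulr_ge0 // ?ltW.
have M12 : m2 d1 d2 <= m1 d1 d2.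
  rewrite -subr_ge0 (_ : m1 d1 d2 - m2 d1 d2 = 2 * tau ^+ 2 * (d1 - d2)); last by rewrite /m1 /m2; ring.
  by apply: mulr_ge0; [apply: mulr_ge0 => //; exact: ltW | rewrite subr_ge0 ltW].
split => //.
  by rewrite /m1 ltr_pwDl ?mulr_gt0 // mulr_ge0.
rewrite -subr_ge0 (_ : (1 + tau ^+ 2) * m2 d1 d2 - (1 - tau ^+ 2) * m1 d1 d2 = 4 * tau ^+ 2 * d2).
  by rewrite !mulr_ge0 // ltW.
by rewrite /m1 /m2; ring.
Qed.

Lemma S_base : Scert k.
Proof.
set D := subp (Y k) (Y k.-1).
have [d21 d20] := dominance k (introT andP (conj hk1 (leqnn k))).
rewrite -/D in d21 d20.
set d1 := tg k D; set d2 := fr k D.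
have [M2 M12 M1 Mi] := m_props _ _ d21 d20.
set phi := mkt k (m1 d1 d2) (m2 d1 d2).
have Np : 0 < Nst phi.
  rewrite (NstE k) tg_mkt fr_mkt /nn2 sqrtr_gt0.
  apply: (lt_le_trans (y := (tau * (m1 d1 d2 + m2 d1 d2)) ^+ 2)).
    by rewrite exprn_gt0 // mulr_gt0 // ltr_pwDl.
  by rewrite lerDr sqr_ge0.
exists phi, (fun _ => Nst phi), (Nst phi * (Dpq D - r k)).
split.
- by rewrite mulr_gt0 // subr_gt0.
- by rewrite /Inv tg_mkt fr_mkt; split.
- by [].
- split; first by move=> j /andP[kj jk]; move: (leq_ltn_trans kj jk); rewrite ltnn.
  by move=> j _; exact: ltW.
move=> P HP; rewrite !big_nat1.
have cs := cs_app phi (subp (P k) (P k.-1)).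
have ex : app phi D = Nst phi * Dpq D.
  rewrite (appE k) (NstE k) (DpqE k) tg_mkt fr_mkt -/d1 -/d2.
  by have := exact_dd2 1 d1 d2 ler01; rewrite !mul1r.
have [a b] := @geTh_tg k P k (HP k (introT andP (conj (leqnn k) (leqnn k)))).
have nn : 0 <= app phi (subp (P k) (Y k)).
  rewrite (appE k) tg_mkt fr_mkt tg_sub fr_sub hYk.
  by rewrite addr_ge0 // mulr_ge0 ?subr_ge0 // ltW.
have lin : app phi (subp (P k) (P k.-1)) =
   app phi (subp (Y k.-1) (P k.-1)) + app phi D + app phi (subp (P k) (Y k)).
  by rewrite /app /D /subp /=; ring.
lra.
Qed.

Lemma S_step t : (1 <= t < k)%N -> Scert t.+1 -> Scert t.
Proof.
move=> /andP[t1 tk] [phi' [mu' [G' [G0 Iv mut [Hmono Hnn] Hmain]]]].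
set D := subp (Y t) (Y t.-1).
have [d21 d20] := dominance t (introT andP (conj t1 (ltnW tk))).
rewrite -/D in d21 d20.
move: Iv; rewrite /Inv tgS frS => -[fg Hfg g0].
have G2 : 0 < G' / 2 by rewrite divr_gt0.
have [l [l0 H1 H2 H3 Hloss]] := step_loc _ _ _ _ _ fg Hfg g0 d21 d20 G2.
set phi := addt t phi' l.
have Nmono : Nst phi' <= Nst phi.
  by rewrite (NstE t) (NstE t phi) tg_addt fr_addt nn2_mono.
exists phi, (fun j => if j == t then Nst phi else mu' j), (G' / 2).
split.
- exact: G2.
- by rewrite /Inv tg_addt fr_addt; split.
- by rewrite eqxx.
- split.
    move=> j /andP[tj jk]; have [->|jt] := eqVneq j t.
      by rewrite (gtn_eqF (ltnSn t)) mut.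
    have tj' : (t < j)%N by rewrite ltn_neqAle eq_sym jt tj.
    rewrite (gtn_eqF (ltn_trans tj' (ltnSn j))).
    by apply: Hmono; rewrite jk andbT.
  move=> j /andP[tj jk]; case: eqP => [_|/eqP jt]; first exact: nn2_ge0.
  by apply: Hnn; rewrite jk andbT ltn_neqAle eq_sym jt tj.
move=> P HP.
have HP' : forall j, (t.+1 <= j <= k)%N -> geTh j P.
  by move=> j /andP[tj jk]; apply: HP; rewrite jk andbT ltnW.
have Hm := Hmain P HP'.
rewrite big_ltn ?ltnS ?(ltnW tk) // [X in _ <= X]big_ltn ?ltnS ?(ltnW tk) // eqxx.
rewrite (eq_big_nat _ _ (F1 := fun j => (if j == t then Nst phi else mu' j) * r j)
   (F2 := fun j => mu' j * r j)); last first.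
  by move=> i /andP[ti _]; rewrite (gtn_eqF ti).
rewrite (eq_big_nat _ _ (F1 := fun j => (if j == t then Nst phi else mu' j) * Dpq (subp (P j) (P j.-1)))
   (F2 := fun j => mu' j * Dpq (subp (P j) (P j.-1)))); last first.
  by move=> i /andP[ti _]; rewrite (gtn_eqF ti).
move: Hm; rewrite /= => Hm.
have cs := cs_app phi (subp (P t) (P t.-1)).
have lin : app phi (subp (P t) (P t.-1)) + app phi' (subp (Y t) (P t)) =
   app phi (subp (Y t.-1) (P t.-1)) + app phi D + l * (tg t (P t) - tg t (Y t)).
  by rewrite !(appE t) /D tg_addt fr_addt !tg_sub !fr_sub; ring.
have [a _] := @geTh_tg t P t (HP t (introT andP (conj (leqnn t) (ltnW tk)))).
have nn : 0 <= l * (tg t (P t) - tg t (Y t)).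
  by rewrite mulr_ge0 // subr_ge0 hYa // t1 (ltnW tk).
have ex : Nst phi * Dpq D - G' / 2 <= app phi D.
  by rewrite (appE t) (NstE t) (DpqE t) tg_addt fr_addt.
have hd : Dpq D = r t by rewrite hdist // t1.
rewrite hd in ex.
lra.
Qed.

Lemma S_all n : (n < k)%N -> Scert (k - n).
Proof.
elim: n => [|n IH] nk; first by rewrite subn0; exact: S_base.
have := IH (ltnW nk).
have -> : (k - n = (k - n.+1).+1)%N by rewrite subnS prednK // subn_gt0 ltnW.
apply: S_step; apply/andP; split.
  by rewrite subn_gt0.
by rewrite ltn_subrL; apply/andP; split; last exact: leq_ltn_trans nk.
Qed.

Lemma core_false (P : nat -> R * R) : P 0%N = (0, 0) ->
  (forall j, (1 <= j <= k)%N -> geTh j P) ->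
  (forall j, (1 <= j <= k)%N -> \sum_(1 <= i < j.+1) Dpq (subp (P i) (P i.-1))
                             <= \sum_(1 <= i < j.+1) r i) -> False.
Proof.
move=> P0 HP Hc.
have hk' : (k.-1 < k)%N by rewrite ltn_predL.
have := S_all k.-1 hk'.
have -> : (k - k.-1 = 1)%N by rewrite -subn1 subKn.
move=> [phi [mu [G [G0 _ _ [Hmono Hnn] Hmain]]]].
have z : app phi (subp (Y 1.-1) (P 1.-1)) = 0.
  by rewrite /= hY0 P0 /app /subp /= !subrr !mulr0 addr0.
have := Hmain P HP; rewrite z add0r => H.
have := @abel k mu (fun i => Dpq (subp (P i) (P i.-1))) r Hmono Hnn Hc.
lra.
Qed.

End Core.
Arguments dd2 {R}. Arguments nn2 {R}. Arguments tg {R}. Arguments fr {R}.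
Arguments subp {R}. Arguments app {R}. Arguments Dpq {R}. Arguments Nst {R}.
Arguments geTh {R}.
Arguments DpqE {R tau} t u. Arguments NstE {R tau} t u.
Arguments tgS {R} t u. Arguments frS {R} t u.
Arguments tg_sub {R} t u v. Arguments fr_sub {R} t u v.

Section Iface.
Variable R : realType.
Variables (a s rho : R).
Hypothesis ha0 : 0 < a.
Hypothesis hapi : a <= pi / 4.
Hypothesis hs : 1 < s.
Hypothesis hrho : 0 < rho.

Let tau := tan a.

Lemma tau_gt0 : 0 < tau.
Proof.
have pi0 : 0 < pi :> R := pi_gt0 R.
have i0 : (0 : R) \in `]- (pi / 2), pi / 2[.
  by rewrite in_itv /= oppr_lt0 divr_gt0.
have ia : a \in `]- (pi / 2), pi / 2[.
  rewrite in_itv /= (lt_trans _ ha0) ?oppr_lt0 ?divr_gt0 //=.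
  apply: le_lt_trans hapi _; rewrite ltr_pM2l // ltf_pV2 ?qualifE //= ?ltr_nat //.
by rewrite /tau -(tan0 R) ltr_tan.
Qed.

Lemma tau_le1 : tau <= 1.
Proof.
have pi0 : 0 < pi :> R := pi_gt0 R.
have iq : (pi / 4 : R) \in `]- (pi / 2), pi / 2[.
  rewrite in_itv /= (lt_trans _ (divr_gt0 pi0 _)) ?oppr_lt0 ?divr_gt0 //=.
  by rewrite ltr_pM2l // ltf_pV2 ?qualifE //= ?ltr_nat.
have ia : a \in `]- (pi / 2), pi / 2[.
  rewrite in_itv /= (lt_trans _ ha0) ?oppr_lt0 ?divr_gt0 //=.
  apply: le_lt_trans hapi _; rewrite ltr_pM2l // ltf_pV2 ?qualifE //= ?ltr_nat //.
rewrite /tau; move: hapi ia; rewrite le_eqVlt => /orP[/eqP ->|h] ia; first by rewrite tan_piquarter.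
by rewrite -tan_piquarter ltW // ltr_tan.
Qed.

Lemma tau2_le1 : tau ^+ 2 <= 1.
Proof. by rewrite expr_le1 ?tau_le1 // ltW // tau_gt0. Qed.

Lemma tauN0 : tau != 0. Proof. by rewrite gt_eqF // tau_gt0. Qed.

Lemma tau_cot : tau * cot a = 1.
Proof. by rewrite /cot -/tau mulfV // tauN0. Qed.

Definition pq (P : R * R) : R * R := (P.1 + tau * P.2, tau * P.2 - P.1).

Lemma dist_pq P Q : dist P Q = Dpq tau (subp (pq P) (pq Q)).
Proof.
rewrite /dist /Dpq /dd2 /pq /subp /=; congr Num.sqrt.
by field; rewrite tauN0.
Qed.

Lemma dist_sym (P Q : R * R) : dist P Q = dist Q P.
Proof. by rewrite /dist -sqrrN opprB -[(P.2 - Q.2) ^+ 2]sqrrN opprB. Qed.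

Definition Th t := pq (Tpt a s t).

Lemma Th0 : Th 0 = (0, 0).
Proof. by rewrite /Th /pq /= mulr0 subr0 addr0. Qed.

Lemma Th1 : Th 1 = (2, 0).
Proof. by rewrite /Th /pq /= tau_cot subrr. Qed.

Lemma ThS2 n : Th n.+2 = ((- s) ^+ n * (1 - s) + s ^+ n * (1 + s),
                         s ^+ n * (1 + s) - (- s) ^+ n * (1 - s)).
Proof.
rewrite /Th /pq /=.
have -> : tau * (s ^+ n * (1 + s) * cot a) = s ^+ n * (1 + s) by rewrite mulrCA tau_cot mulr1.
by [].
Qed.

Lemma ThS2_tg n : tg n.+2 (Th n.+2) = 2 * s ^+ n.+1.
Proof.
rewrite ThS2 /tg /= exprNn -signr_odd exprS.
by case: (odd n) => /=; rewrite ?expr1 ?expr0; ring.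
Qed.

Lemma ThS2_fr n : fr n.+2 (Th n.+2) = 2 * s ^+ n.
Proof.
rewrite ThS2 /fr /= exprNn -signr_odd.
by case: (odd n) => /=; rewrite ?expr1 ?expr0; ring.
Qed.

Lemma s_gt0 : 0 < s. Proof. by apply: lt_trans hs. Qed.
Lemma sX_gt0 n : 0 < s ^+ n. Proof. by rewrite exprn_gt0 // s_gt0. Qed.
Lemma sX_lt n : s ^+ n < s ^+ n.+1.
Proof. by rewrite ltr_eXn2l. Qed.

Lemma Th_tg t : (1 <= t)%N -> tg t (Th t) = 2 * s ^+ t.-1.
Proof. by case: t => [//|[|n]] _; [rewrite Th1 /tg /= expr0 mulr1 | rewrite ThS2_tg]. Qed.

Lemma Th_fr2 t : (2 <= t)%N -> fr t (Th t) = 2 * s ^+ t.-2.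
Proof. by case: t => [//|[//|n]] _; rewrite ThS2_fr. Qed.

Lemma Th_fr1 : fr 1 (Th 1) = 0.
Proof. by rewrite Th1. Qed.

Lemma Th_TU t : (1 <= t)%N -> tg t (Th t.+1) = tg t (Th t).
Proof.
move=> t1; rewrite -frS Th_tg // Th_fr2 ?ltnS //.
Qed.

Lemma Th_TO t : (1 <= t)%N -> fr t (Th t) < tg t (Th t).
Proof.
case: t => [//|[|n]] _; first by rewrite Th1 /fr /tg /=.
rewrite ThS2_tg ThS2_fr ltr_pM2l //; exact: sX_lt.
Qed.

Lemma Th_fr_ge0 t : 0 <= fr t (Th t).
Proof.
case: t => [|[|n]]; first by rewrite Th0 /fr; case: odd.
  by rewrite Th_fr1.
by rewrite ThS2_fr mulr_ge0 // ltW // sX_gt0.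
Qed.

Lemma Th_odd n : odd n -> Th n.+2 = (2 * s ^+ n.+1, 2 * s ^+ n).
Proof.
move=> on; rewrite ThS2 exprNn -signr_odd on expr1 exprS; congr pair; ring.
Qed.

Lemma Th_even n : ~~ odd n -> Th n.+2 = (2 * s ^+ n, 2 * s ^+ n.+1).
Proof.
move=> on; rewrite ThS2 exprNn -signr_odd (negbTE on) expr0 exprS; congr pair; ring.
Qed.

Definition Xr (j : nat) : R := 2 * (- s) ^+ j.-1.
Definition reqs (n : nat) : seq R := map Xr (iota 1 n).

Lemma Xr_norm j : `|Xr j| = 2 * s ^+ j.-1.
Proof. by rewrite /Xr normrM normrX normrN !gtr0_norm // s_gt0. Qed.

Lemma Xr_odd n : odd n -> Xr n.+1 = - (2 * s ^+ n).
Proof. by move=> on; rewrite /Xr /= exprNn -signr_odd on expr1; ring. Qed.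

Lemma Xr_even n : ~~ odd n -> Xr n.+1 = 2 * s ^+ n.
Proof. by move=> on; rewrite /Xr /= exprNn -signr_odd (negbTE on) expr0; ring. Qed.

Lemma mem_reqs j n : (1 <= j <= n)%N -> Xr j \in reqs n.
Proof.
by move=> jn; rewrite /reqs map_f // mem_iota add1n ltnS.
Qed.

Lemma Th_in t : (1 <= t)%N -> (Th t).1 \in 0 :: reqs t /\ - (Th t).2 \in 0 :: reqs t.
Proof.
case: t => [//|[|n]] _.
  rewrite Th1 /=; split; last by rewrite oppr0 inE eqxx.
  have := @mem_reqs 1 1 isT; rewrite /Xr /= expr0 mulr1 => h.
  by rewrite inE h orbT.
have m1 : Xr n.+1 \in 0 :: reqs n.+2.
  by rewrite inE (@mem_reqs n.+1 n.+2) ?orbT //= ltnS leqnSn.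
have m2 : Xr n.+2 \in 0 :: reqs n.+2.
  by rewrite inE (@mem_reqs n.+2 n.+2) ?orbT //= leqnn.
case on : (odd n).
  rewrite Th_odd //=; split.
    by move: m2; rewrite (Xr_even n.+1) //= on.
  by move: m1; rewrite Xr_odd.
rewrite Th_even ?on //=; split.
  by move: m1; rewrite Xr_even ?on.
by move: m2; rewrite (Xr_odd n.+1) //= on.
Qed.

Lemma Th_cover t j : (1 <= j <= t)%N -> - (Th t).2 <= Xr j <= (Th t).1.
Proof.
case: t => [|[|n]]; first by case: j => [|[|]].
  case: j => [|[|j]] // _; rewrite Th1 /Xr /= expr0 mulr1 oppr0 lexx andbT; exact: ler0n.
move=> /andP[j1 jn].
have HT : 2 * s ^+ n <= (Th n.+2).1 /\ 2 * s ^+ n <= (Th n.+2).2.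
  case on : (odd n).
    by rewrite Th_odd //=; split => //; rewrite ler_pM2l // ltW // sX_lt.
  by rewrite Th_even ?on //=; split => //; rewrite ler_pM2l // ltW // sX_lt.
case: (ltnP j n.+2) => jn2.
  have : `|Xr j| <= 2 * s ^+ n.
    by rewrite Xr_norm ler_pM2l // ler_eXn2l // -ltnS prednK.
  rewrite ler_norml => /andP[h1 h2]; case: HT => h3 h4.
  by rewrite (le_trans h2 h3) andbT lerNl (le_trans _ h4) // lerNl.
have -> : j = n.+2 by apply/eqP; rewrite eqn_leq jn jn2.
case on : (odd n).
  have h1 := ltW (sX_gt0 n); have h2 := ltW (sX_gt0 n.+1).
  rewrite Th_odd // (Xr_even n.+1) /= ?on // lexx andbT; lra.
have h1 := ltW (sX_gt0 n); have h2 := ltW (sX_gt0 n.+1).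
rewrite Th_even ?on // (Xr_odd n.+1) /= ?on // lexx /=; lra.
Qed.

Lemma covers_pq y P : covers a P y = (- (pq P).2 <= y <= (pq P).1).
Proof. by rewrite /covers /pq /= opprB [P.2 * _]mulrC. Qed.

Lemma Th_ge0 t : 0 <= (Th t).1 /\ 0 <= (Th t).2.
Proof.
case: t => [|t]; first by rewrite Th0.
have h1 := Th_fr_ge0 t.+1; have h2 := Th_TO t.+1 isT.
by move: h1 h2; rewrite /tg /fr; case: odd => h1 h2; split => //; apply: le_trans (ltW h2).
Qed.

Lemma FC_geTh t P : (1 <= t)%N -> inFC a (0 :: reqs t) P ->
  (Th t).1 <= (pq P).1 /\ (Th t).2 <= (pq P).2.
Proof.
move=> t1 [_ hall]; have [i1 i2] := Th_in t t1.
have := allP hall _ i1; have := allP hall _ i2; rewrite !covers_pq.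
move=> /andP[c1 _] /andP[_ c2]; split => //.
by rewrite -lerN2.
Qed.

Lemma size_reqs n : size (reqs n) = n.
Proof. by rewrite /reqs size_map size_iota. Qed.

Lemma cot_gt0 : 0 < cot a.
Proof. by rewrite /cot invr_gt0 tau_gt0. Qed.

Lemma Tpt2_ge0 t : 0 <= (Tpt a s t).2.
Proof.
case: t => [|[|n]] /=; first by [].
  exact: ltW cot_gt0.
by rewrite !mulr_ge0 // ?ltW ?cot_gt0 ?sX_gt0 // addr_gt0 // s_gt0.
Qed.

Lemma Tpt_FC t i : (1 <= t)%N -> inFC a (0 :: take i (reqs t)) (Tpt a s t).
Proof.
move=> t1; split; first exact: Tpt2_ge0.
apply/allP => y; rewrite inE => /orP[/eqP ->|].
  by rewrite covers_pq -/(Th t); have [h1 h2] := Th_ge0 t; rewrite oppr_le0 h2.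
move=> /mem_take /mapP[j]; rewrite mem_iota add1n ltnS => hj ->.
by rewrite covers_pq -/(Th t) Th_cover.
Qed.

Definition OPTset t := [set c : R | exists Q, offline_feasible a (reqs t) Q /\
  c = path_cost (size (reqs t)) Q]%classic.

Lemma dist_ge0 (P Q : R * R) : 0 <= dist P Q. Proof. exact: sqrtr_ge0. Qed.

Lemma dist_xx (P : R * R) : dist P P = 0.
Proof. by rewrite /dist !subrr expr0n addr0 sqrtr0. Qed.

Definition QT t : nat -> R * R := fun i => if i is 0 then (0, 0) else Tpt a s t.

Lemma QT_feas t : (1 <= t)%N -> offline_feasible a (reqs t) (QT t).
Proof. by move=> t1; split => // i /andP[i1 _]; case: i i1 => // i _; exact: Tpt_FC. Qed.

Lemma QT_cost t : (1 <= t)%N -> path_cost (size (reqs t)) (QT t) = opt_o a s t.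
Proof.
rewrite size_reqs /path_cost; case: t => // t _.
by rewrite big_ord_recl /= big1 ?addr0 //; move=> i _; rewrite /QT /= dist_xx.
Qed.

Lemma OPTset_lb t : has_lbound (OPTset t).
Proof.
exists 0 => c [Q [_ ->]]; rewrite /path_cost; apply: sumr_ge0 => i _; exact: dist_ge0.
Qed.

Lemma OPT_le t : (1 <= t)%N -> OPT a (reqs t) <= opt_o a s t.
Proof.
move=> t1; apply: (ge_inf (OPTset_lb t)).
by exists (QT t); split; [exact: QT_feas | rewrite QT_cost].
Qed.

Lemma OPT_gt0 t : (1 <= t)%N -> 0 < OPT a (reqs t).
Proof.
move=> t1; have ti : 0 < tau^-1 by rewrite invr_gt0 tau_gt0.
apply: (lt_le_trans ti); apply: lb_le_inf.
  by exists (opt_o a s t), (QT t); split; [exact: QT_feas | rewrite QT_cost].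
move=> c [Q [[Q0 HQ] ->]].
rewrite size_reqs /path_cost; move: HQ; case: t t1 => // t _ HQ.
rewrite big_ord_recl /=.
have hrest : 0 <= \sum_(i < t) dist (Q (bump 0 i)) (Q (bump 0 i).+1).
  by apply: sumr_ge0 => i _; exact: dist_ge0.
suff : tau^-1 <= dist (Q 0%N) (Q 1%N) by move=> h; apply: (le_trans h); rewrite lerDl.
have := HQ 1%N; rewrite size_reqs /= => /(_ isT) [_ hall].
have e : Xr 1 = 2 by rewrite /Xr /= expr0 mulr1.
rewrite e take0 in hall.
have := allP hall 2; rewrite !inE eqxx orbT => /(_ isT).
have := allP hall 0; rewrite !inE eqxx => /(_ isT).
rewrite /covers /= => /andP[c1 _] /andP[_ c2].
have h : 1 <= tau * (Q 1%N).2.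
  rewrite -/tau in c1 c2; rewrite [tau * _]mulrC; lra.
have y2 : tau^-1 <= (Q 1%N).2.
  rewrite -[X in _ <= X](mulKf tauN0) -[X in X <= _]mulr1.
  by apply: ler_wpM2l => //; exact: ltW ti.
rewrite Q0 /dist /= !sub0r.
apply: (le_trans y2); apply: (le_trans (ler_norm _)).
rewrite -sqrtr_sqr; apply: ler_wsqrtr.
by rewrite !sqrrN lerDr sqr_ge0.
Qed.

Definition rr t := rho * (opt_o a s t - opt_o a s t.-1).

Definition Zpt t z : R * R :=
  ((Tpt a s t).1 + z * ((Tpt a s t.+1).1 - (Tpt a s t).1),
   (Tpt a s t).2 + z * ((Tpt a s t.+1).2 - (Tpt a s t).2)).


Lemma tg_pq_Zpt t' t z : tg t' (pq (Zpt t z)) = tg t' (Th t) + z * (tg t' (Th t.+1) - tg t' (Th t)).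
Proof. by rewrite /tg /pq /Th /Zpt; case: odd => /=; ring. Qed.

Lemma fr_pq_Zpt t' t z : fr t' (pq (Zpt t z)) = fr t' (Th t) + z * (fr t' (Th t.+1) - fr t' (Th t)).
Proof. by rewrite /fr /pq /Th /Zpt; case: odd => /=; ring. Qed.

Lemma sign_pq t (U V : R * R) :
  (tg t (pq U) - fr t (pq U)) * (tg t (pq V) - fr t (pq V)) = 4 * (U.1 * V.1).
Proof. by rewrite /tg /fr /pq; case: odd => /=; ring. Qed.

Lemma Th_e t : (1 <= t)%N -> fr t (Th t) < fr t (Th t.+1).
Proof.
move=> t1; rewrite -[fr t (Th t.+1)]tgS Th_tg // (lt_trans (Th_TO t t1)) // Th_tg //.
by rewrite ltr_pM2l //; case: t t1 => // t _; exact: sX_lt.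
Qed.

Lemma dd2_lt (w u1 u2 : R) : 0 <= w -> 0 <= u1 -> u1 < u2 -> dd2 tau w u1 < dd2 tau w u2.
Proof.
move=> w0 u10 u12; rewrite /dd2.
have t0 := tau_gt0; have tn := tauN0.
have wu : 0 < w + u2 by lra.
rewrite ltr_sqrt; last first.
  apply: ltr_wpDl; first exact: sqr_ge0.
  by rewrite exprn_gt0 // divr_gt0 // mulr_gt0.
rewrite -subr_gt0.
have -> : ((w - u2) / 2) ^+ 2 + ((w + u2) / (2 * tau)) ^+ 2 - (((w - u1) / 2) ^+ 2 + ((w + u1) / (2 * tau)) ^+ 2)
  = (u2 - u1) * ((u1 + u2) * (1 + tau^-2) + 2 * w * (tau^-2 - 1)) / 4.
  by field.
apply: divr_gt0 => //; apply: mulr_gt0; first by rewrite subr_gt0.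
apply: ltr_pwDl.
  apply: mulr_gt0; first by lra.
  by rewrite ltr_wpDr // invr_ge0 exprn_ge0 // ltW.
apply: mulr_ge0; first by rewrite mulr_ge0.
rewrite subr_ge0 -[1]invr1 lef_pV2 ?qualifE //= ?exprn_gt0 //.
exact: tau2_le1.
Qed.

Lemma hedge_dist t Zp z : (1 <= t)%N -> fr t (pq Zp) = fr t (Th t) ->
  dist Zp (Zpt t z) = dd2 tau (tg t (Th t) - tg t (pq Zp)) (z * (fr t (Th t.+1) - fr t (Th t))).
Proof.
move=> t1 HW1.
rewrite dist_sym dist_pq (DpqE t) tg_sub fr_sub tg_pq_Zpt fr_pq_Zpt Th_TU // HW1.
by rewrite subrr mulr0 addr0 [fr t (Th t) + _]addrC addrK.
Qed.

Lemma hedge_uniq t Zp z1 z2 : (1 <= t)%N -> fr t (pq Zp) = fr t (Th t) ->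
  tg t (pq Zp) <= tg t (Th t) ->
  hedge_set a s rho t Zp z1 -> hedge_set a s rho t Zp z2 -> z1 = z2.
Proof.
move=> t1 HW1 HW2 [z10 d1] [z20 d2].
move: d1 d2; rewrite -/(Zpt t z1) -/(Zpt t z2) !hedge_dist // => d1 d2.
have e0 : 0 < fr t (Th t.+1) - fr t (Th t) by rewrite subr_gt0 Th_e.
have w0 : 0 <= tg t (Th t) - tg t (pq Zp) by rewrite subr_ge0.
case: (ltgtP z1 z2) => // h; exfalso.
  have hm : z1 * (fr t (Th t.+1) - fr t (Th t)) < z2 * (fr t (Th t.+1) - fr t (Th t)).
    by rewrite ltr_pM2r.
  have := dd2_lt _ _ _ w0 (mulr_ge0 z10 (ltW e0)) hm.
  by rewrite d1 d2 ltxx.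
have hm : z2 * (fr t (Th t.+1) - fr t (Th t)) < z1 * (fr t (Th t.+1) - fr t (Th t)).
  by rewrite ltr_pM2r.
have := dd2_lt _ _ _ w0 (mulr_ge0 z20 (ltW e0)) hm.
by rewrite d1 d2 ltxx.
Qed.

Lemma hedge_root t Zp : (1 <= t)%N -> fr t (pq Zp) = fr t (Th t) ->
  tg t (pq Zp) <= tg t (Th t) ->
  ~ (rr t < Dpq tau (subp (Th t) (pq Zp))) -> exists z, hedge_set a s rho t Zp z.
Proof.
move=> t1 HW1 HW2 hn.
have t0 := tau_gt0; have tn := tauN0.
set w := tg t (Th t) - tg t (pq Zp).
set e := fr t (Th t.+1) - fr t (Th t).
have e0 : 0 < e by rewrite subr_gt0 Th_e.
have w0 : 0 <= w by rewrite subr_ge0.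
have hd : Dpq tau (subp (Th t) (pq Zp)) = dd2 tau w 0.
  by rewrite (DpqE t) tg_sub fr_sub HW1 subrr.
rewrite hd in hn; move/negP: hn; rewrite -leNgt => hR.
set R0 := rr t in hR *.
have R00 : 0 <= R0 by apply: le_trans hR; exact: sqrtr_ge0.
set X := ((w - 0) / 2) ^+ 2 + ((w + 0) / (2 * tau)) ^+ 2.
have X0 : 0 <= X by rewrite addr_ge0 // sqr_ge0.
have XR : X <= R0 ^+ 2.
  have := sqr_sqrtr X0; rewrite -/(dd2 tau w 0) => hX.
  have := sqrtr_ge0 X; rewrite -/(dd2 tau w 0) => hs0.
  by rewrite -hX; nra.
set a' := 1 + tau ^+ 2.
set b' := (1 - tau ^+ 2) * w.
set c := (1 + tau ^+ 2) * w ^+ 2 - 4 * tau ^+ 2 * R0 ^+ 2.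
have a0 : 0 < a' by rewrite /a' ltr_wpDr // ltW // exprn_gt0.
have c0 : c <= 0.
  have -> : c = 4 * tau ^+ 2 * (X - R0 ^+ 2) by rewrite /c /X; field.
  rewrite pmulr_rle0 ?subr_le0 // mulr_gt0 // exprn_gt0 //.
set D := b' ^+ 2 - a' * c.
have D0 : b' ^+ 2 <= D by rewrite /D lerDl oppr_ge0 pmulr_rle0.
set sq := Num.sqrt D.
have b0 : 0 <= b' by rewrite /b' mulr_ge0 // subr_ge0 tau2_le1.
have sqb : b' <= sq.
  rewrite /sq -(ger0_norm b0) -sqrtr_sqr; exact: ler_wsqrtr.
set u := (- b' + sq) / a'.
have u0 : 0 <= u.
  by rewrite /u; apply: divr_ge0; [rewrite addrC subr_ge0 | exact: ltW a0].
have hu : a' * u ^+ 2 + 2 * b' * u + c = 0.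
  have -> : a' * u ^+ 2 + 2 * b' * u + c = (sq ^+ 2 - (b' ^+ 2 - a' * c)) / a'.
    by rewrite /u; field; rewrite gt_eqF.
  by rewrite /sq sqr_sqrtr ?subrr ?mul0r // (le_trans (sqr_ge0 _) D0).
have key : ((w - u) / 2) ^+ 2 + ((w + u) / (2 * tau)) ^+ 2 = R0 ^+ 2.
  apply/eqP; rewrite -subr_eq0; apply/eqP.
  have -> : ((w - u) / 2) ^+ 2 + ((w + u) / (2 * tau)) ^+ 2 - R0 ^+ 2
    = (a' * u ^+ 2 + 2 * b' * u + c) / (4 * tau ^+ 2).
    by rewrite /a' /b' /c; field.
  by rewrite hu mul0r.
exists (u / e); split; first by rewrite divr_ge0 // ltW.
rewrite -/(Zpt t (u / e)) hedge_dist // -/w -/e mulfVK ?gt_eqF //.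
by rewrite /dd2 key sqrtr_sqr ger0_norm.
Qed.

Hypothesis hval : maxhedge_valid a s rho.

Lemma mh_unfold t Z : maxhedge a s rho t.+1 = Some Z -> exists Zp,
  [/\ maxhedge a s rho t = Some Zp, (hedge_set a s rho t.+1 Zp !=set0)%classic &
      Z = Zpt t.+1 (sup (hedge_set a s rho t.+1 Zp))].
Proof.
rewrite /=; case: (maxhedge a s rho t) => [Zp|] //.
by case: asboolP => // HS [<-]; exists Zp.
Qed.

Lemma mh_none t Zp : maxhedge a s rho t = Some Zp -> maxhedge a s rho t.+1 = None ->
  ~ (hedge_set a s rho t.+1 Zp !=set0)%classic.
Proof. by rewrite /= => ->; case: asboolP. Qed.

Definition F3 t Z := [/\ tg t (pq Z) = tg t (Th t), fr t (Th t) <= fr t (pq Z) &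
                        fr t (pq Z) < tg t (Th t)].

Lemma pq00 : pq (0, 0) = (0, 0).
Proof. by rewrite /pq /= mulr0 addr0 subr0. Qed.

Lemma HW_prev t Zp : (1 <= t)%N -> maxhedge a s rho t.-1 = Some Zp ->
  ((1 <= t.-1)%N -> F3 t.-1 Zp) ->
  fr t (pq Zp) = fr t (Th t) /\ tg t (pq Zp) <= tg t (Th t).
Proof.
case: t => [//|[|t]] _ /=.
  move=> [<-] _; rewrite pq00 Th_fr1; split; first by rewrite /fr.
  by rewrite Th1 /tg /=.
move=> _ /(_ isT) [h1 h2 h3].
rewrite frS h1 -Th_TU //; split; first by rewrite frS.
rewrite tgS; apply: ltW; apply: lt_trans h3 _.
rewrite -[tg t.+1 (Th t.+1)]Th_TU // -frS; exact: Th_TO.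
Qed.

Lemma mh_facts t : (1 <= t)%N -> forall Z, maxhedge a s rho t = Some Z ->
  F3 t Z /\ exists Zp, maxhedge a s rho t.-1 = Some Zp /\ dist Zp Z = rr t.
Proof.
elim: t => // t IH _ Z HZ.
have [Zp [HZp HS EZ]] := @mh_unfold t Z HZ.
have [HW1 HW2] := @HW_prev t.+1 Zp isT HZp (fun h => (IH h Zp HZp).1).
have [z0 Hz0] := HS.
have Hset : hedge_set a s rho t.+1 Zp = [set z0]%classic.
  apply/seteqP; split => y /=; last by move=> ->.
  by move=> Hy; exact: (@hedge_uniq t.+1 Zp y z0 isT HW1 HW2 Hy Hz0).
rewrite Hset sup1 in EZ.
have [z00 hd] := Hz0.
have e0 := Th_e t.+1 isT.
have Htg : tg t.+1 (pq Z) = tg t.+1 (Th t.+1).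
  by rewrite EZ tg_pq_Zpt Th_TU // subrr mulr0 addr0.
split; last by exists Zp; split => //; rewrite EZ.
split => //.
  by rewrite EZ fr_pq_Zpt lerDl mulr_ge0 // subr_ge0 ltW.
have hv := hval t.+1 Z isT HZ.
have := sign_pq t.+1 Z (Tpt a s t.+1); rewrite -/(Th t.+1).
have hT : 0 < tg t.+1 (Th t.+1) - fr t.+1 (Th t.+1) by rewrite subr_gt0 Th_TO.
move=> hsg; have : 0 < (tg t.+1 (pq Z) - fr t.+1 (pq Z)) * (tg t.+1 (Th t.+1) - fr t.+1 (Th t.+1)).
  by rewrite hsg mulr_gt0.
by rewrite pmulr_lgt0 // subr_gt0 Htg.
Qed.

Lemma take_reqs i j : (i <= j)%N -> take i (reqs j) = reqs i.
Proof. by move=> ij; rewrite /reqs -map_take take_iota (minn_idPl ij). Qed.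

Definition Palg (A : seq R -> R * R) (i : nat) : R * R :=
  if i is 0 then (0, 0) else A (reqs i).

Lemma alg_cost_sum (A : seq R -> R * R) j :
  alg_cost A (reqs j) = \sum_(1 <= i < j.+1) Dpq tau (subp (pq (Palg A i)) (pq (Palg A i.-1))).
Proof.
rewrite /alg_cost /path_cost size_reqs big_add1 succnK big_mkord.
apply: eq_bigr => [[i ij]] _ /=.
rewrite -dist_pq dist_sym /alg_pos /Palg.
rewrite take_reqs //; case: i ij => [|i] ij //.
by rewrite take_reqs // ltnW.
Qed.

Lemma rr_sum j : \sum_(1 <= i < j.+1) rr i = rho * opt_o a s j.
Proof.
rewrite big_add1 succnK /rr -mulr_sumr telescope_sumr //.
by rewrite /opt_o dist_xx subr0.
Qed.

Lemma main (A : seq R -> R * R) : maxhedge_fails a s rho -> online_alg a A ->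
  (rho%:E < comp_ratio a A)%E.
Proof.
move=> [i0 Hi0] HA.
rewrite ltNge; apply/negP => Hle.
have exN : exists n, maxhedge a s rho n == None by exists i0; rewrite Hi0.
case: (ex_minnP exN) => k Hk Hmin.
have Hk' : maxhedge a s rho k = None by apply/eqP.
have k1 : (1 <= k)%N by case: k Hk {Hmin Hk'}.
have Hlt : forall t, (t < k)%N -> exists Z, maxhedge a s rho t = Some Z.
  move=> t tk; case E: (maxhedge a s rho t) => [Z|]; first by exists Z.
  by have := Hmin t; rewrite E eqxx => /(_ isT); rewrite leqNgt tk.
pose Y := fun t => if maxhedge a s rho t is Some Z then pq Z else Th t.
pose P := fun i => pq (Palg A i).
have hYk : Y k = Th k by rewrite /Y Hk'.
have hF3 : forall t, (1 <= t < k)%N -> exists Z, maxhedge a s rho t = Some Z /\ F3 t Z.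
  move=> t /andP[t1 tk]; have [Z HZ] := Hlt t tk; exists Z; split => //.
  by have [] := @mh_facts t t1 Z HZ.
apply: (@core_false R tau tau_gt0 tau2_le1 k Th Y rr k1 _ _ _ hYk Th_TU Th_fr1 _ _ P).
- by rewrite /Y /= pq00.
- move=> t /andP[t1 tk]; case: (ltnP t k) => tk'.
    have [Z [HZ [h1 _ _]]] := hF3 t (introT andP (conj t1 tk')).
    by rewrite /Y HZ.
  have -> : t = k by apply/eqP; rewrite eqn_leq tk tk'.
  by rewrite hYk.
- move=> t /andP[t1 tk]; case: (ltnP t k) => tk'.
    have [Z [HZ [_ h2 h3]]] := hF3 t (introT andP (conj t1 tk')).
    by rewrite /Y HZ.
  have -> : t = k by apply/eqP; rewrite eqn_leq tk tk'.
  by rewrite hYk; split => //; exact: Th_TO.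
- move=> t /andP[t1 tk].
  have [Z HZ] := Hlt t tk.
  have [_ [Zp [HZp hd]]] := @mh_facts t t1 Z HZ.
  by rewrite /Y HZ HZp -dist_pq dist_sym hd.
- have kk : (k.-1 < k)%N by rewrite ltn_predL.
  have [Zp HZp] := Hlt k.-1 kk.
  have [HW1 HW2] := @HW_prev k Zp k1 HZp (fun h => (@mh_facts k.-1 h Zp HZp).1).
  have hne := @mh_none k.-1 Zp HZp; rewrite prednK // in hne.
  have {}hne := hne Hk'.
  rewrite /Y Hk' HZp.
  case: (ltP (rr k) (Dpq tau (subp (Th k) (pq Zp)))) => // hge.
  exfalso; apply: hne.
  apply: (@hedge_root k Zp k1 HW1 HW2).
  by rewrite ltNge hge.
- by rewrite /P /Palg pq00.
- move=> j /andP[j1 jk].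
  have hne : reqs j != [::] by rewrite -size_eq0 size_reqs -lt0n.
  have := FC_geTh j (A (reqs j)) j1 (HA _ hne).
  by rewrite /geTh /P /Palg; case: j j1 {jk hne}.
move=> j /andP[j1 jk].
rewrite -alg_cost_sum rr_sum.
have hO := OPT_gt0 j j1.
have : ((alg_cost A (reqs j) / OPT a (reqs j))%:E <= comp_ratio a A)%E.
  by apply: ereal_sup_ubound; exists (reqs j).
move=> h; have := le_trans h Hle; rewrite lee_fin ler_pdivrMr // => h2.
apply: (le_trans h2); apply: ler_wpM2l; [exact: ltW | exact: OPT_le j j1].
Qed.

End Iface.


Theorem lemma14 (R : realType) (a s rho : R) :
  0 < a -> a <= pi / 4 -> 1 < s -> 0 < rho ->
  maxhedge_valid a s rho -> maxhedge_fails a s rho ->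
  forall A : seq R -> R * R, online_alg a A ->
    (rho%:E < comp_ratio a A)%E.
Proof.
move=> ha0 hapi hs hrho hval hf A HA.
exact: (@main R a s rho ha0 hapi hs hrho hval A hf HA).
Qed.
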